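(* (a) Let $\beta$ be an irrational real number and let $w\in\{\mathrm{N},\mathrm{E}\}^*$ be a $\beta$-Dyck word. Then $\mathrm{sw}_\beta(w)$ is a $\beta$-Dyck word. (b) Let $r,s\in\mathbb{Z}$ and let $w\in\{\mathrm{N},\mathrm{E}\}^*$ be an $(r,s)$-Dyck word. Then $\mathrm{sw}^-_{r,s}(w)$ is an $(r,s)$-Dyck word.
   Context: $\{\mathrm{N},\mathrm{E}\}^*$ is the set of finite words over the letters $\mathrm{N},\mathrm{E}$. A word $w=w_1\cdots w_n$ is identified with the lattice path starting at $(0,0)$ whose $i$-th step is a unit north step if $w_i=\mathrm{N}$ and a unit east step if $w_i=\mathrm{E}$. Each step is thought of as a ''wand'' whose tip is the endpoint of the step. For integers $r,s$, the $(r,s)$-level of a lattice point $(x,y)$ is $ry+sx$. Under the east-north convention, the level $l_i$ of the letter $w_i$ is the $(r,s)$-level of the endpoint of the $i$-th step; equivalently $l_0=0$ and $l_i=l_{i-1}+r$ if $w_i=\mathrm{N}$, $l_i=l_{i-1}+s$ if $w_i=\mathrm{E}$. A word $w$ is an $(r,s)$-Dyck word if all its letters have nonnegative level, i.e. $l_i\ge 0$ for $1\le i\le n$. The sweep map $\mathrm{sw}^-_{r,s}:\{\mathrm{N},\mathrm{E}\}^*\to\{\mathrm{N},\mathrm{E}\}^*$ sends $w$ to the word obtained as follows: start with the empty word; for $k=-1,-2,-3,\ldots$ and then for $k=\ldots,3,2,1,0$ (i.e. first all negative values in decreasing order, then all nonnegative values in decreasing order), scan $w$ from right to left and append each letter $w_i$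 ($1\le i\le n$) with $l_i=k$. For irrational $\beta$, the level of a step is $y-\beta x$ where $(x,y)$ is the endpoint (tip) of the step; distinct steps have distinct such levels. The irrational sweep map $\mathrm{sw}_\beta(w)$ lists the letters of $w$ in the order in which a line $y-\beta x=k$ hits their tips as $k$ decreases from just below $0$ to $-\infty$ and then from $+\infty$ down to $0$; i.e., first the letters with negative level in decreasing order of level, then the letters with positive level in decreasing order of level. A word $w$ is a $\beta$-Dyck word if every lattice point $(x,y)$ visited by its path satisfies $y-\beta x\ge 0$. *)

(* Defs.v *)
From HB Require Import structures.
From mathcomp Require Import all_boot all_order all_algebra.
From mathcomp Require Import reals.
Set Implicit Arguments. Unset Strict Implicit. Unset Printing Implicit Defensive.
Import Order.TTheory GRing.Theory Num.Theory.
Local Open Scope ring_scope.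

Inductive letter := N | E.
Definition isN (a : letter) : bool := if a is N then true else false.
Definition isE (a : letter) : bool := if a is E then true else false.

Definition word := seq letter.

Definition xcoord (u : word) : nat := count isE u.
Definition ycoord (u : word) : nat := count isN u.

Definition rs_level (r s : int) (u : word) : int :=
  r * (ycoord u)%:Z + s * (xcoord u)%:Z.

(* level l_i of letter w_i (1 <= i <= n): level of the endpoint of step i,
   i.e. of the prefix of length i. Index j = i - 1 (0-based). *)
Definition rs_levels (r s : int) (w : word) : seq int :=
  [seq rs_level r s (take j.+1 w) | j <- iota 0 (size w)].

Definition rs_dyck (r s : int) (w : word) : bool :=
  all (fun l => 0 <= l) (rs_levels r s w).

Definition rs_letters_at (r s : int) (w : word) (k : int) : word :=
  [seq p.1 | p <- rev (zip w (rs_levels r s w)) & p.2 == k].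

(* sw^-_{r,s}: all levels lie in [-M, M] with M = n(|r|+|s|); we run k over
   -1, -2, ..., -M and then M, M-1, ..., 0 (empty levels contribute nothing). *)
Definition sw_minus (r s : int) (w : word) : word :=
  let M := (size w * (`|r| + `|s|))%N in
  flatten [seq rs_letters_at r s w (- (j.+1)%:Z) | j <- iota 0 M] ++
  flatten [seq rs_letters_at r s w (M - j)%:Z | j <- iota 0 M.+1].

Definition beta_level (R : realType) (beta : R) (u : word) : R :=
  (ycoord u)%:R - beta * (xcoord u)%:R.

Definition beta_levels (R : realType) (beta : R) (w : word) : seq R :=
  [seq beta_level beta (take j.+1 w) | j <- iota 0 (size w)].

Definition beta_dyck (R : realType) (beta : R) (w : word) : bool :=
  all (fun j => 0 <= beta_level beta (take j w)) (iota 0 (size w).+1).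

(* ordering: negative levels first, in decreasing order of level, then
   positive levels in decreasing order of level *)
Definition sweep_before (R : realType) (p q : letter * R) : bool :=
  if (p.2 < 0) == (q.2 < 0) then q.2 <= p.2 else (p.2 < 0).

Definition sw_beta (R : realType) (beta : R) (w : word) : word :=
  [seq p.1 | p <- sort (@sweep_before R) (zip w (beta_levels beta w))].

(* Main.v *)
Require Import Defs.
From mathcomp Require Import all_boot all_order all_algebra.
From mathcomp Require Import reals zify ring lra.
Set Implicit Arguments. Unset Strict Implicit. Unset Printing Implicit Defensive.
Import Order.TTheory GRing.Theory Num.Theory.
Local Open Scope ring_scope.

Lemma thresh (R : realDomainType) (a : nat -> R) n t :
  Num.max (a n) t - Num.max (a 0%N) t <= \sum_(0 <= i < n | t <= a i.+1) (a i.+1 - a i).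
Proof.
elim: n => [|n IH]; first by rewrite big_geq // subrr.
rewrite big_mkcond big_nat_recr //= -big_mkcond.
have H : Num.max (a n.+1) t - Num.max (a n) t <= (if t <= a n.+1 then a n.+1 - a n else 0).
  rewrite /Order.max; case: ifP => h1; case: ifP => h2; case: ifP => h3; lra.
by rewrite -(subrKA (Num.max (a n) t)) addrC lerD.
Qed.

Lemma take_filter (R : realDomainType) (K : nat -> R) (O : seq nat) j :
  pairwise (fun x y => K y < K x) O -> (0 < j <= size O)%N ->
  take j O = filter (fun i => K (nth 0%N O j.-1) <= K i) O.
Proof.
move=> hp /andP[]; case: j => [//|j] _ jO /=.
have tr : transitive (fun x y => K y < K x).
  by move=> y x z h1 h2; exact: lt_trans h2 h1.
have hs := sorted_ltn_nth tr 0%N (pairwise_sorted hp).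
rewrite -[X in filter _ X](cat_take_drop j.+1 O) filter_cat.
have -> : [seq i <- take j.+1 O | K (nth 0%N O j) <= K i] = take j.+1 O.
  apply/all_filterP/allP => y /(nthP 0%N) [k]; rewrite (size_takel jO) => kj <-.
  rewrite nth_take //.
  have [->|kne] := eqVneq k j; first by [].
  apply: ltW; apply: hs; rewrite ?inE; try lia.
have -> : [seq i <- drop j.+1 O | K (nth 0%N O j) <= K i] = [::].
  apply/eqP/negPn; rewrite -has_filter; apply/hasPn => y /(nthP 0%N) [k]; rewrite size_drop => kj <-.
  rewrite nth_drop -ltNge; apply: hs; rewrite ?inE; first by [].
    by rewrite -ltn_subRL.
  lia.
exact: (esym (cats0 _)).
Qed.

Lemma thresh0 (R : realDomainType) (a : nat -> R) n t :
  a 0%N <= a n -> 0 <= \sum_(0 <= i < n | t <= a i.+1) (a i.+1 - a i).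
Proof.
move=> h; apply: le_trans (thresh a n t).
rewrite subr_ge0 /Order.max; case: ifP => h1; case: ifP => h2; lra.
Qed.

Lemma lev_step (R : realDomainType) (f : letter -> R) (w : word) i :
  (i < size w)%N ->
  \sum_(x <- take i.+1 w) f x - \sum_(x <- take i w) f x = f (nth N w i).
Proof.
move=> hi; rewrite (take_nth N hi) -cats1 big_cat big_seq1 /=.
by rewrite addrC addrK.
Qed.

Lemma key_lemma (R : realDomainType) (f : letter -> R) (w : word) (O : seq nat)
    (K : nat -> R) j :
  perm_eq O (iota 0 (size w)) -> pairwise (fun x y => K y < K x) O ->
  (0 < j <= size w)%N ->
  \sum_(x <- take j (map (nth N w) O)) f x =
  \sum_(0 <= i < size w | K (nth 0%N O j.-1) <= K i) f (nth N w i).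
Proof.
move=> hperm hp hj.
have sO : size O = size w by rewrite (perm_size hperm) size_iota.
rewrite -map_take (take_filter hp) ?sO // big_map big_filter.
rewrite /index_iota subn0.
exact: perm_big.
Qed.

Lemma pairwise_and (T : eqType) (r1 r2 : rel T) (s : seq T) :
  pairwise r1 s -> pairwise r2 s -> pairwise (fun x y => r1 x y && r2 x y) s.
Proof.
elim: s => //= x s IH /andP[a1 p1] /andP[a2 p2]; rewrite IH // andbT.
by apply/allP => y ys; rewrite (allP a1 y ys) (allP a2 y ys).
Qed.

Lemma count_NE (u : word) : (count isN u + count isE u)%N = size u.
Proof. by rewrite -(count_predC isN); congr addn; apply: eq_count; case. Qed.

Lemma beta_level_sum (R : realType) (beta : R) (u : word) :
  beta_level beta u = \sum_(x <- u) (if x is N then 1 else - beta).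
Proof.
elim: u => [|x u IH]; first by rewrite big_nil /beta_level /ycoord /xcoord /= mulr0 subr0.
rewrite big_cons -IH /beta_level /ycoord /xcoord /=.
case: x => /=; rewrite ?add0n ?add1n.
  rewrite -addn1 natrD; lra.
rewrite -addn1 natrD mulrDr; lra.
Qed.

Lemma beta_inj (R : realType) (beta : R) (w : word) i j :
  irrational beta -> (i < j)%N -> (j <= size w)%N ->
  beta_level beta (take i w) != beta_level beta (take j w).
Proof.
move=> hirr hij hj; apply/negP => /eqP heq.
set d := drop i (take j w).
have ed : take j w = take i w ++ d by rewrite /d -{1}(cat_take_drop i (take j w)) take_takel // ltnW.
have sd : size d = (j - i)%N by rewrite /d size_drop size_takel.
move: heq; rewrite ed /beta_level /ycoord /xcoord !count_cat !natrD => heq.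
have h2 : (count isN d)%:R = beta * (count isE d)%:R :> R by lra.
have hcd := count_NE d.
have [hx|hx] := eqVneq (count isE d) 0%N.
  move: h2; rewrite hx mulr0 => /eqP; rewrite pnatr_eq0 => /eqP hy.
  move: hcd; rewrite hy hx sd; lia.
apply: hirr; apply/rationalP; exists (count isN d)%:Z, (count isE d).
rewrite -pmulrn h2 mulfK // pnatr_eq0 //.
Qed.

Lemma sweep_total (R : realType) : total (@sweep_before R).
Proof.
move=> p q; rewrite /sweep_before eq_sym.
case: (p.2 < 0) (q.2 < 0) => [] [] //=; exact: le_total.
Qed.

Lemma partA (R : realType) (beta : R) (w : word) :
  irrational beta -> beta_dyck beta w -> beta_dyck beta (sw_beta beta w).
Proof.
move=> hirr hd.
set n := size w.
set f := fun x : letter => if x is N then 1 else - beta.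
set a := fun i => beta_level beta (take i w).
have ha : forall i, (i <= n)%N -> 0 <= a i.
  by move=> i hi; apply: (allP hd); rewrite mem_iota add0n ltnS.
set L := fun i => a i.+1.
set g := fun i => (nth N w i, L i).
have hz : zip w (beta_levels beta w) = map g (iota 0 n).
  by rewrite /beta_levels -{1}(mkseq_nth N w) /mkseq zip_map.
set e := relpre g (@sweep_before R).
set O := sort e (iota 0 n).
have hv : sw_beta beta w = map (nth N w) O.
  by rewrite /sw_beta hz sort_map -map_comp.
have hperm : perm_eq O (iota 0 n) by rewrite /O perm_sort.
have hmem : forall i, i \in O -> (i < n)%N.
  by move=> i; rewrite (perm_mem hperm) mem_iota.
have hsort : sorted e O by apply: sort_sorted => x y; exact: sweep_total.
have hsort2 : sorted (fun i j => L j <= L i) O.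
  apply: (sub_in_sorted (P := fun i => (i < n)%N)) hsort.
    move=> x y hx hy; rewrite /e /= /sweep_before /=.
    by rewrite !ltNge !ha.
  by apply/allP => x /hmem.
have hpw : pairwise (fun i j => L j <= L i) O.
  rewrite -sorted_pairwise //; move=> y x z h1 h2; exact: le_trans h2 h1.
have huniq : uniq O by rewrite (perm_uniq hperm) iota_uniq.
have hps : pairwise (fun i j => L j < L i) O.
  have hne : pairwise (fun x y : nat => x != y) O by move: huniq; rewrite uniq_pairwise.
  apply: (sub_in_pairwise (P := fun i => (i < n)%N) _ _ (pairwise_and hpw hne)).
    move=> x y hx hy /andP[hle hxy]; rewrite lt_neqAle hle andbT.
    case: (ltngtP x y) hxy => // hlt _.
    - by rewrite eq_sym; apply: beta_inj => //; rewrite ltnS.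
    - by apply: beta_inj => //; rewrite ltnS.
  by apply/allP => x /hmem.
rewrite /beta_dyck hv size_map (perm_size hperm) size_iota.
apply/allP => j; rewrite mem_iota add0n ltnS.
case: j => [|j] hj; first by rewrite take0 beta_level_sum big_nil.
rewrite beta_level_sum (key_lemma _ hperm hps) /=; last by [].
set t := L (nth 0%N O j).
have -> : \sum_(0 <= i < size w | t <= L i) (if nth N w i is N then 1 else - beta) =
          \sum_(0 <= i < n | t <= a i.+1) (a i.+1 - a i).
  rewrite big_mkcond [RHS]big_mkcond; apply: eq_big_nat => i /andP[_ hi].
  by rewrite /L /a !beta_level_sum lev_step.
apply: thresh0.
have -> : a 0%N = 0 by rewrite /a take0 beta_level_sum big_nil.
exact: ha.
Qed.

Lemma rs_level_sum (r s : int) (u : word) :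
  rs_level r s u = \sum_(x <- u) (if x is N then r else s).
Proof.
elim: u => [|x u IH]; first by rewrite big_nil /rs_level /ycoord /xcoord /= !mulr0.
rewrite big_cons -IH /rs_level /ycoord /xcoord /=.
case: x => /=; rewrite ?add0n ?add1n -addn1 PoszD mulrDr mulr1; lia.
Qed.

Lemma rs_bound (r s : int) (u : word) :
  \sum_(x <- u) (if x is N then r else s) <= (size u * (absz r + absz s))%N%:Z.
Proof.
elim: u => [|x u IH]; first by rewrite big_nil.
rewrite big_cons /= mulSn PoszD.
have h1 := lez_abs r; have h2 := lez_abs s.
move: IH; set S := \sum_(_ <- u) _; set P := (size u * _)%N => IH.
case: x; rewrite PoszD; lia.
Qed.

Definition blk (n : nat) (L : nat -> int) (k : int) : seq nat :=
  [seq i <- rev (iota 0 n) | L i == k].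

Lemma pairwise_blocks (n : nat) (L : nat -> int) (ks : seq int) :
  pairwise (fun x y => y < x) ks ->
  pairwise (fun x y => (n.+1)%:Z * L y + (y.+1)%:Z < (n.+1)%:Z * L x + (x.+1)%:Z)
    (flatten [seq blk n L k | k <- ks]).
Proof.
elim: ks => [|k ks IH] //= /andP[hk hks].
rewrite pairwise_cat IH // andbT; apply/andP; split.
  apply/allrelP => x y; rewrite mem_filter mem_rev mem_iota => /andP[/eqP Lx /andP[_ xn]].
  move=> /flatten_mapP[k' k'ks]; rewrite mem_filter mem_rev mem_iota => /andP[/eqP Ly /andP[_ yn]].
  have hkk : k' < k by exact: (allP hk).
  have hm : (n.+1)%:Z * (L y + 1) <= (n.+1)%:Z * L x by rewrite ler_pM2l // Lx Ly; lia.
  move: hm; rewrite mulrDr mulr1; lia.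
have hrev : pairwise (fun x y : nat => (y < x)%N) (rev (iota 0 n)).
  rewrite -sorted_pairwise; last by move=> a b c h1 h2; exact: ltn_trans h2 h1.
  by rewrite rev_sorted iota_ltn_sorted.
have hb : pairwise (fun x y : nat => (y < x)%N) (blk n L k) by exact: pairwise_filter.
have ha : all (fun i => L i == k) (blk n L k) by exact: filter_all.
apply: (sub_in_pairwise _ ha hb).
move=> x y /eqP Lx /eqP Ly hxy; rewrite Lx Ly; lia.
Qed.

Lemma partB (r s : int) (w : word) :
  rs_dyck r s w -> rs_dyck r s (sw_minus r s w).
Proof.
move=> hd.
set n := size w.
set f := fun x : letter => if x is N then r else s.
set a := fun i => rs_level r s (take i w).
set L := fun i => a i.+1.
have hL0 : forall i, (i < n)%N -> 0 <= L i.
  by move=> i hi; apply: (allP hd); apply: map_f; rewrite mem_iota.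
set M := (n * (absz r + absz s))%N.
have hLM : forall i, (i < n)%N -> L i <= M%:Z.
  move=> i hi; rewrite /L /a rs_level_sum; apply: le_trans (rs_bound r s _) _.
  rewrite lez_nat leq_mul2r size_takel ?hi ?orbT //.
set O := flatten [seq blk n L k | k <- [seq (M - j)%:Z | j <- iota 0 M.+1]].
have hlet : forall k, rs_letters_at r s w k = map (nth N w) (blk n L k).
  move=> k; rewrite /rs_letters_at /rs_levels -{1}(mkseq_nth N w) /mkseq zip_map.
  by rewrite -map_rev filter_map -map_comp.
have hneg : forall k, k < 0 -> blk n L k = [::].
  move=> k hk; apply/eqP/negPn; rewrite -has_filter; apply/hasPn => i.
  rewrite mem_rev mem_iota /= => hi; apply/eqP => hLk.
  have := hL0 i hi; rewrite hLk; lia.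
have hfl : forall ks, flatten [seq rs_letters_at r s w k | k <- ks] =
    map (nth N w) (flatten [seq blk n L k | k <- ks]).
  by elim=> //= k ks ->; rewrite map_cat hlet.
have hv : sw_minus r s w = map (nth N w) O.
  have -> : sw_minus r s w = flatten [seq rs_letters_at r s w (- (j.+1)%:Z) | j <- iota 0 M] ++
     flatten [seq rs_letters_at r s w (M - j)%:Z | j <- iota 0 M.+1] by [].
  have -> : flatten [seq rs_letters_at r s w (- (j.+1)%:Z) | j <- iota 0 M] = [::].
    by elim: (iota 0 M) => //= j js ->; rewrite cats0 hlet hneg.
  by rewrite /= -hfl /O -map_comp.
set K := fun i : nat => (n.+1)%:Z * L i + (i.+1)%:Z.
have hps : pairwise (fun x y => K y < K x) O.
  apply: pairwise_blocks; rewrite pairwise_map.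
  have hi : pairwise ltn (iota 0 M.+1).
    by rewrite -sorted_pairwise ?iota_ltn_sorted //; exact: ltn_trans.
  have ha : all (fun j => (j <= M)%N) (iota 0 M.+1).
    by apply/allP => j; rewrite mem_iota.
  apply: (sub_in_pairwise _ ha hi) => x y hx hy /= hxy.
  rewrite ltz_nat; lia.
have hperm : perm_eq O (iota 0 n).
  apply: uniq_perm; first exact: (pairwise_uniq (r := fun x y => K y < K x)) hps.
    exact: iota_uniq.
  move=> i; rewrite mem_iota /=; apply/idP/idP.
    by move=> /flatten_mapP[k _]; rewrite mem_filter mem_rev mem_iota => /andP[_].
  move=> hi; apply/flatten_mapP; exists (L i).
    apply/mapP; exists (M - absz (L i))%N; first by rewrite mem_iota /= ltnS leq_subr.
    have := hL0 i hi; have := hLM i hi; lia.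
  by rewrite mem_filter mem_rev mem_iota /= hi eqxx.
rewrite /rs_dyck hv /rs_levels size_map (perm_size hperm) size_iota.
apply/allP => l /mapP [j]; rewrite mem_iota /= => hj ->.
rewrite rs_level_sum (key_lemma _ hperm hps) //=.
set t := K (nth 0%N O j).
set S := \sum_(0 <= i < size w | t <= K i) _.
set a' := fun i : nat => (n.+1)%:Z * a i + i%:Z.
have ha0 : a 0%N = 0 by rewrite /a take0 rs_level_sum big_nil.
have han : 0 <= a n.
  case: (posnP n) => [->|hn]; first by rewrite ha0.
  by move: (hL0 n.-1); rewrite /L /= (prednK hn) leqnn; apply.
have H0 := @thresh0 int a' n t.
have e1 : \sum_(0 <= i < n | t <= a' i.+1) (a' i.+1 - a' i) =
     (n.+1)%:Z * S + \sum_(0 <= i < n | t <= K i) 1.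
  rewrite /S mulr_sumr -big_split /=; rewrite big_mkcond [RHS]big_mkcond.
  apply: eq_big_nat => i /andP[_ hi] /=.
  rewrite /K /L; case: ifP => // _.
  have := lev_step f hi; rewrite -!rs_level_sum /f => h.
  rewrite /a' /a -h mulrBr; lia.
have e2 : \sum_(0 <= i < n | t <= K i) (1 : int) <= n%:Z.
  rewrite big_mkcond /=; apply: le_trans (ler_sum _ (G := fun _ => 1) _) _.
    by move=> i _; case: ifP.
  by rewrite sumr_const_nat subn0 natz.
have H1 : 0 <= (n.+1)%:Z * S + \sum_(0 <= i < n | t <= K i) (1 : int).
  rewrite -e1; apply: H0; rewrite /a' ha0 mulr0 add0r.
  by apply: addr_ge0 => //; apply: mulr_ge0.
move: H1 e2; set C := \sum_(0 <= i < n | t <= K i) (1 : int) => H1 e2.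
rewrite leNgt; apply/negP => hS.
have : (n.+1)%:Z * S <= (n.+1)%:Z * (-1) by rewrite ler_pM2l //; lia.
lia.
Qed.

Unset Implicit Arguments.

Theorem mainTheorem1 (R : realType) :
  (forall (beta : R) (w : word),
      @irrational R beta -> beta_dyck beta w -> beta_dyck beta (sw_beta beta w)) /\
  (forall (r s : int) (w : word),
      rs_dyck r s w -> rs_dyck r s (sw_minus r s w)).
Proof.
split.
- move=> beta w; exact: partA.
- move=> r s w; exact: partB.
Qed.
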